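(* Let the system and the memory each be a classical bit, i.e. states are density operators diagonal in a fixed basis $\{|0\rangle,|1\rangle\}$ of $\mathbb{C}^2$, and let $U$ be a permutation of the four product basis states $|i\rangle\otimes|k\rangle$ ($i,k\in\{0,1\}$), regarded as a unitary on $\mathbb{C}^2\otimes\mathbb{C}^2$. Then the memory depth $\Delta_U$ of the memory channel generated by $U$ satisfies $\Delta_U\in\{0,1,\infty\}$.
   Context: A memory channel generated by a fixed unitary $U$ on system $\otimes$ memory acts as follows. The memory starts in a state $\xi_1$ and uncorrelated inputs $\varrho_1,\varrho_2,\dots$ are fed in successively. In the $j$th use the memory is in state $\xi_j$, the $j$th input is transformed by $\mathcal{E}_j[\varrho]=\mathrm{tr}_{\rm mem}[U(\varrho\otimes\xi_j)U^\dagger]$, and the memory is updated to $\xi_{j+1}=\mathrm{tr}_{\rm sys}[U(\varrho_j\otimes\xi_j)U^\dagger]$. The memory depth $\Delta_U$ is the smallest integer $\Delta\ge 0$ such that for every $n>\Delta$ the channel $\mathcal{E}_n$ is independent of the initial memory state $\xi_1$ and of the inputs $\varrho_j$ with $j<n-\Delta$, for all admissible choices of these; if no such $\Delta$ exists, $\Delta_U=\infty$. In the classical case all states $\xi_1,\varrho_j$ are diagonal (probability distributions). *)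

(* Defs.v *)
From HB Require Import structures.
From mathcomp Require Import all_boot all_order all_algebra all_fingroup.
Set Implicit Arguments. Unset Strict Implicit. Unset Printing Implicit Defensive.
Import Order.TTheory GRing.Theory Num.Theory.
Local Open Scope ring_scope.

(* A diagonal density operator on C^2 = a probability distribution on {0,1}. *)
Definition is_dist (R : realFieldType) (p : bool -> R) : Prop :=
  (forall b, 0 <= p b) /\ p false + p true = 1.

(* Output of the j-th use on input p when the memory is in state xi:
   tr_mem [U (p (x) xi) U^dag]  (U a permutation of basis states (i,k)). *)
Definition chan (R : realFieldType) (U : {perm bool * bool})
    (xi p : bool -> R) : bool -> R :=
  fun i' => \sum_(x : bool * bool | (U x).1 == i') p x.1 * xi x.2.

(* Memory update: tr_sys [U (p (x) xi) U^dag]. *)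
Definition upd (R : realFieldType) (U : {perm bool * bool})
    (p xi : bool -> R) : bool -> R :=
  fun k' => \sum_(x : bool * bool | (U x).2 == k') p x.1 * xi x.2.

(* memst U xi1 rho k = xi_{k+1}  (inputs rho j indexed from j = 1). *)
Fixpoint memst (R : realFieldType) (U : {perm bool * bool})
    (xi1 : bool -> R) (rho : nat -> bool -> R) (k : nat) : bool -> R :=
  match k with
  | 0 => xi1
  | k'.+1 => upd U (rho k) (memst U xi1 rho k')
  end.

Definition En (R : realFieldType) (U : {perm bool * bool})
    (xi1 : bool -> R) (rho : nat -> bool -> R) (n : nat) : (bool -> R) -> bool -> R :=
  chan U (memst U xi1 rho n.-1).

Definition depth_ok (R : realFieldType) (U : {perm bool * bool}) (D : nat) : Prop :=
  forall n : nat, (D < n)%N ->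
  forall (xi1 xi1' : bool -> R) (rho rho' : nat -> bool -> R),
    is_dist xi1 -> is_dist xi1' ->
    (forall j, is_dist (rho j)) -> (forall j, is_dist (rho' j)) ->
    (forall j : nat, (n - D <= j)%N -> (j < n)%N -> rho j = rho' j) ->
    forall p : bool -> R, is_dist p ->
      forall b, En U xi1 rho n p b = En U xi1' rho' n p b.

(* Delta_U = d, with d = None encoding infinity. *)
Definition IsMemoryDepth (R : realFieldType) (U : {perm bool * bool})
    (d : option nat) : Prop :=
  match d with
  | Some D => depth_ok R U D /\ (forall D', depth_ok R U D' -> (D <= D')%N)
  | None => forall D, ~ depth_ok R U D
  end.

(* Main.v *)
Require Import Defs.
From mathcomp Require Import all_boot all_order all_algebra all_fingroup.
From mathcomp Require Import ring.
From Stdlib Require Import Classical FunctionalExtensionality.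
Set Implicit Arguments. Unset Strict Implicit. Unset Printing Implicit Defensive.
Import Order.TTheory GRing.Theory Num.Theory.
Local Open Scope ring_scope.

Lemma sum4 (R : realFieldType) (P : pred (bool*bool)) (F : bool*bool -> R) :
  \sum_(x | P x) F x =
  (if P (true, true) then F (true, true) else 0) +
  (if P (true, false) then F (true, false) else 0) +
  ((if P (false, true) then F (false, true) else 0) +
   (if P (false, false) then F (false, false) else 0)).
Proof.
rewrite big_mkcond.
have -> : \sum_(x:bool*bool) (if P x then F x else 0) =
  \sum_(i:bool) \sum_(j:bool) (if P (i,j) then F (i,j) else 0).
  by rewrite pair_big; apply eq_bigr => [[i j]].
by rewrite !big_bool.
Qed.

Lemma dist_sub (R : realFieldType) (p : bool -> R) :
  is_dist p -> p true = 1 - p false.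
Proof. by move=> [_ h]; rewrite -h; ring. Qed.

Lemma upd_dist (R : realFieldType) (U : {perm bool * bool}) (p xi : bool -> R) :
  is_dist p -> is_dist xi -> is_dist (upd U p xi).
Proof.
move=> hp hx; split.
  move=> b; apply: sumr_ge0 => x _; apply: mulr_ge0; [exact: hp.1|exact: hx.1].
rewrite /upd !sum4 (dist_sub hp) (dist_sub hx).
case: ((U (true,true)).2); case: ((U (true,false)).2);
case: ((U (false,true)).2); case: ((U (false,false)).2) => /=; ring.
Qed.

Lemma memst_dist (R : realFieldType) (U : {perm bool * bool}) xi1 rho k :
  is_dist xi1 -> (forall j, is_dist (rho j)) -> is_dist (memst U xi1 rho k : bool -> R).
Proof.
move=> hx hr; elim: k => [|k IH] //=; exact: upd_dist.
Qed.

Lemma caseA (R : realFieldType) (U : {perm bool * bool}) :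
  (forall i, (U (i,false)).1 = (U (i,true)).1) -> depth_ok R U 1.
Proof.
move=> hA n _ xi1 xi1' rho rho' hx hx' hr hr' _ p hp b.
rewrite /En /chan !sum4 -!hA.
rewrite (dist_sub (memst_dist U n.-1 hx hr)) (dist_sub (memst_dist U n.-1 hx' hr')).
case: ((U (true,false)).1 == b); case: ((U (false,false)).1 == b) => /=; ring.
Qed.

Lemma caseB (R : realFieldType) (U : {perm bool * bool}) :
  (forall i, (U (i,false)).2 = (U (i,true)).2) -> depth_ok R U 1.
Proof.
move=> hB [|[|n]] // _ xi1 xi1' rho rho' hx hx' hr hr' heq p hp b.
rewrite /En /=.
have -> : rho n.+1 = rho' n.+1 by apply: heq; rewrite ?subn1 ?ltnSn.
have -> : upd U (rho' n.+1) (memst U xi1 rho n) = upd U (rho' n.+1) (memst U xi1' rho' n).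
  apply: functional_extensionality => k.
  rewrite /upd !sum4 -!hB.
  rewrite (dist_sub (memst_dist U n hx hr)) (dist_sub (memst_dist U n hx' hr')).
  case: ((U (true,false)).2 == k); case: ((U (false,false)).2 == k) => /=; ring.
by [].
Qed.

Definition delta (R : realFieldType) (a : bool) : bool -> R :=
  fun b => if a == b then 1 else 0.

Lemma delta_dist (R : realFieldType) a : is_dist (delta R a).
Proof.
split; first by move=> b; rewrite /delta; case: (a == b) => //; rewrite ler01.
by case: a; rewrite /delta /= ?addr0 ?add0r.
Qed.

Lemma upd_delta (R : realFieldType) (U : {perm bool * bool}) i k :
  upd U (delta R i) (delta R k) = delta R (U (i,k)).2.
Proof.
apply: functional_extensionality => b.
rewrite /upd sum4 /delta.
by case: i; case: k => /=; rewrite ?mulr1 ?mulr0 ?mul0r ?if_same ?addr0 ?add0r.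
Qed.

Lemma chan_delta (R : realFieldType) (U : {perm bool * bool}) i k b :
  chan U (delta R k) (delta R i) b = delta R (U (i,k)).1 b.
Proof.
rewrite /chan sum4 /delta.
by case: i; case: k => /=; rewrite ?mulr1 ?mulr0 ?mul0r ?if_same ?addr0 ?add0r.
Qed.

Lemma iter_neg (h : bool -> bool) : h false != h true ->
  forall m, iter m h true = ~~ iter m h false.
Proof.
move=> hh; elim=> [|m IH] //=; rewrite IH.
case: (iter m h false); move: hh; case: (h false); case: (h true) => //.
Qed.

Lemma caseC (R : realFieldType) (U : {perm bool * bool}) i0 i1 :
  (U (i0,false)).2 != (U (i0,true)).2 ->
  (U (i1,false)).1 != (U (i1,true)).1 ->
  forall D, ~ depth_ok R U D.
Proof.
move=> h0 h1 D hD.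
pose h := fun k => (U (i0,k)).2.
have mE : forall k m, memst U (delta R k) (fun _ => delta R i0) m = delta R (iter m h k).
  move=> k; elim=> [|m IH] //=; by rewrite IH upd_delta.
have := hD D.+1 (ltnSn D) (delta R false) (delta R true)
  (fun _ => delta R i0) (fun _ => delta R i0) (delta_dist _ _) (delta_dist _ _)
  (fun _ => delta_dist _ _) (fun _ => delta_dist _ _) (fun _ _ _ => erefl)
  (delta R i1) (delta_dist _ _) ((U (i1, iter D h false)).1).
rewrite /En /= !mE !chan_delta (iter_neg h0).
rewrite /delta eqxx.
have -> : ((U (i1, ~~ iter D h false)).1 == (U (i1, iter D h false)).1) = false.
  case: (iter D h false) => /=; last rewrite eq_sym; exact/negbTE.
by move/eqP; rewrite oner_eq0.
Qed.

Lemma key (R : realFieldType) (U : {perm bool * bool}) :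
  depth_ok R U 1 \/ forall D, ~ depth_ok R U D.
Proof.
case hA: (((U (false,false)).1 == (U (false,true)).1) &&
          ((U (true,false)).1 == (U (true,true)).1)).
  left; apply: caseA; move/andP: hA => [/eqP a /eqP b] [] //.
case hB: (((U (false,false)).2 == (U (false,true)).2) &&
          ((U (true,false)).2 == (U (true,true)).2)).
  left; apply: caseB; move/andP: hB => [/eqP a /eqP b] [] //.
right.
have [i1 hi1] : exists i, (U (i,false)).1 != (U (i,true)).1.
  case E: ((U (false,false)).1 == (U (false,true)).1).
    by exists true; move: hA; rewrite E /= => ->.
  by exists false; rewrite E.
have [i0 hi0] : exists i, (U (i,false)).2 != (U (i,true)).2.
  case E: ((U (false,false)).2 == (U (false,true)).2).
    by exists true; move: hB; rewrite E /= => ->.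
  by exists false; rewrite E.
exact: caseC hi0 hi1.
Qed.

Theorem mainTheorem2 (R : realFieldType) (U : {perm bool * bool}) :
  (exists d : option nat, IsMemoryDepth R U d) /\
  (forall d : option nat, IsMemoryDepth R U d ->
     d = Some 0%N \/ d = Some 1%N \/ d = None).
Proof.
have K := key R U.
split.
  case: K => [h1|hinf]; last by exists None.
  case: (classic (depth_ok R U 0)) => h0.
    by exists (Some 0%N); split.
  exists (Some 1%N); split => // [[|D']] //.
case=> [D|]; last by right; right.
case=> hD hmin; case: K => [h1|hinf]; last by case: (hinf D).
have := hmin 1%N h1.
by case: D {hD hmin} => [|[|D]] //; [left|right; left].
Qed.
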